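(* Let $m\geq 3$ and $n\geq 2$ be integers, let $K_m$ be the complete graph of order $m$ and $H_n$ a graph of order $n$. Then $rvc(K_m\diamond H_n)=\lceil m/3\rceil$.
   Context: All graphs are finite, simple, connected and undirected. A rainbow vertex $k$-coloring of $G$ is a map $c:V(G)\to\{1,\dots,k\}$ such that every two vertices are joined by a path whose internal vertices all receive distinct colors; $rvc(G)$ is the least $k$ for which $G$ has one. For graphs $G_m$ (order $m$) and $H_n$ (order $n$) on disjoint vertex sets, the edge corona $G_m\diamond H_n$ is obtained from one copy of $G_m$ and $|E(G_m)|$ vertex-disjoint copies of $H_n$, one per edge of $G_m$, by joining both end vertices of the $j$-th edge of $G_m$ to every vertex of the $j$-th copy of $H_n$. *)

(* Defs.v *)
From mathcomp Require Import all_boot.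
Set Implicit Arguments. Unset Strict Implicit. Unset Printing Implicit Defensive.

Definition simple_graph (T : finType) (e : rel T) : Prop :=
  symmetric e /\ irreflexive e.

Definition connected_graph (T : finType) (e : rel T) : Prop :=
  forall x y : T, connect e x y.

Definition complete_rel (m : nat) : rel 'I_m := fun i j => i != j.
Arguments complete_rel m : clear implicits.

Definition edge_of (TG : finType) (eG : rel TG) : pred {set TG} :=
  fun E => [exists x, exists y, eG x y && (E == [set x; y])].

Definition edgeT (TG : finType) (eG : rel TG) := {E : {set TG} | edge_of eG E}.

Definition coronaV (TG TH : finType) (eG : rel TG) : finType :=
  (TG + (edgeT eG * TH))%type.

(* Adjacency in the edge corona: G-edges, H-edges inside each copy, and
   both endpoints of edge E joined to every vertex of the copy of H for E. *)
Definition corona_rel (TG TH : finType) (eG : rel TG) (eH : rel TH)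
  : rel (coronaV TH eG) :=
  fun u v =>
    match u, v with
    | inl x, inl y => eG x y
    | inl x, inr (E, _) => x \in val E
    | inr (E, _), inl y => y \in val E
    | inr (E, h), inr (E', h') => (E == E') && eH h h'
    end.
Arguments corona_rel {TG TH} eG eH.

(* x and y are joined by a path x = v0, v1, ..., vl = y (the walk x :: p)
   whose internal vertices v1, ..., v(l-1) receive pairwise distinct colors. *)
Definition rainbow_connected (T : finType) (e : rel T) (k : nat)
  (c : T -> 'I_k) (x y : T) : Prop :=
  exists p : seq T,
    [/\ path e x p, last x p = y & uniq (map c (behead (belast x p)))].

Definition rainbow_vertex_coloring (T : finType) (e : rel T) (k : nat)
  (c : T -> 'I_k) : Prop :=
  forall x y : T, rainbow_connected e c x y.

Definition has_rvc (T : finType) (e : rel T) (k : nat) : Prop :=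
  exists c : T -> 'I_k, rainbow_vertex_coloring e c.

Definition rvc_is (T : finType) (e : rel T) (k : nat) : Prop :=
  has_rvc e k /\ forall k', has_rvc e k' -> k <= k'.

(* Main.v *)
Require Import Defs.
From mathcomp Require Import all_boot.
From mathcomp Require Import zify.

Set Implicit Arguments. Unset Strict Implicit. Unset Printing Implicit Defensive.

Lemma exit_lemma (T : eqType) (e : rel T) (P : pred T) x p :
  path e x p -> P x -> ~~ P (last x p) ->
  exists u v, [/\ u \in x :: p, v \in p, P u, ~~ P v & e u v].
Proof.
elim: p x => [|y p IH] x /=; first by move=> _ ->.
move=> /andP[exy pp] Px Pl.
case Py: (P y).
  have [u [v [H1 H2 H3 H4 H5]]] := IH y pp Py Pl.
  exists u, v; split => //; rewrite !inE in H1 H2 *.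
    by rewrite H1 orbT.
  by rewrite H2 orbT.
exists x, y; split => //; rewrite ?inE ?eqxx ?Py //.
Qed.

Lemma internal_mem (T : eqType) x (p : seq T) v :
  v \in p -> v != last x p -> v \in behead (belast x p).
Proof.
case/lastP: p => [|q z] //.
rewrite belast_rcons last_rcons /= mem_rcons inE => /orP[/eqP->|//].
by rewrite eqxx.
Qed.

Lemma edge_mem m (E : edgeT (complete_rel m)) :
  exists a b, a != b /\ val E = [set a; b].
Proof.
case: E => E /= /existsP[a /existsP[b /andP[ab /eqP->]]].
by exists a, b.
Qed.

Lemma uniq_map_eq (T1 T2 : eqType) (f : T1 -> T2) s x y :
  uniq (map f s) -> x \in s -> y \in s -> f x = f y -> x = y.
Proof.
elim: s => [|z s IH] //= /andP[nz us]; rewrite !inE.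
move=> /orP[/eqP->|xs] /orP[/eqP->|ys] fe //.
- by move: nz; rewrite fe (map_f f ys).
- by move: nz; rewrite -fe (map_f f xs).
- exact: IH.
Qed.

Lemma four (a b c d : nat) : a != b -> a != c -> a != d -> b != c -> b != d -> c != d ->
  a %/ 3 = c %/ 3 -> a %/ 3 = d %/ 3 -> b %/ 3 = c %/ 3 -> False.
Proof. lia. Qed.

Section Main.
Variables (m : nat) (TH : finType) (eH : rel TH).
Notation V := (coronaV TH (complete_rel m)).
Notation e := (corona_rel (complete_rel m) eH).

Lemma lower k (c : V -> 'I_k) (h0 : TH) :
  rainbow_vertex_coloring e c -> (m + 2) %/ 3 <= k.
Proof.
move=> Hc; rewrite leqNgt; apply/negP => Hk.
have Hk3 : 3 * k < m by lia.
pose f := fun i : 'I_m => c (inl i).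
have [j Hj] : exists j : 'I_k, 3 < #|[set i | f i == j]|.
  apply/existsP; apply: contraT; rewrite negb_exists => /forallP H.
  suff : m <= 3 * k by lia.
  have -> : m = #|'I_m| by rewrite card_ord.
  rewrite -sum1_card (partition_big f predT) //=.
  apply: leq_trans (_ : \sum_(j < k) 3 <= _); last by rewrite sum_nat_const card_ord mulnC.
  apply: leq_sum => j' _.
  have := H j'; rewrite -leqNgt => Hle.
  rewrite sum1dep_card.
  apply: leq_trans Hle; apply: eq_leq; apply: eq_card => i; by rewrite !inE.
set A := [set i | f i == j] in Hj.
have eA : forall i, i \in A -> f i = j by move=> i; rewrite inE => /eqP.
move: Hj; rewrite cardE.
have uA := enum_uniq (mem A).
have mA : forall i, i \in enum A -> i \in A by move=> i; rewrite mem_enum.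
case: (enum A) uA mA => [|a [|b [|c0 [|d t]]]] //= uA mA _.
move: uA; rewrite !inE !negb_or => /and5P[/and4P[ab ac ad _] /and3P[bc bd _] /andP[cd _] _ _].
have fa := eA a (mA a (mem_head _ _)).
have fb : f b = j by apply: eA; apply: mA; rewrite !inE eqxx orbT.
have fc : f c0 = j by apply: eA; apply: mA; rewrite !inE eqxx !orbT.
have fd : f d = j by apply: eA; apply: mA; rewrite !inE eqxx !orbT.
have eE : edge_of (complete_rel m) [set a; b].
  by apply/existsP; exists a; apply/existsP; exists b; rewrite /complete_rel ab eqxx.
have eE' : edge_of (complete_rel m) [set c0; d].
  by apply/existsP; exists c0; apply/existsP; exists d; rewrite /complete_rel cd eqxx.
pose E : edgeT (complete_rel m) := exist _ [set a; b] eE.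
pose E' : edgeT (complete_rel m) := exist _ [set c0; d] eE'.
have EE' : E != E'.
  apply/negP => /eqP /(congr1 val) /= /setP /(_ a); rewrite !inE eqxx /=.
  by move=> /esym /orP[] /eqP ea; move: ac ad; rewrite ea eqxx.
have [p [pp lp up]] := Hc (inr (E, h0)) (inr (E', h0)).
set s := behead _ in up.
have [y [Ey sy]] : exists y, y \in val E /\ inl y \in s.
  have := @exit_lemma _ e (fun u : V => if u is inr (F, _) then F == E else false) _ _ pp.
  rewrite eqxx lp => /(_ isT); rewrite eq_sym => /(_ EE') [u [v [_ vp Pu Pv euv]]].
  case: v vp Pv euv => [y|[F' h']] vp Pv euv.
    case: u Pu euv => [//|[F h]] /= /eqP -> Ey; exists y; split => //.
    by apply: internal_mem; rewrite // lp.
  case: u Pu euv => [//|[F h]] /= /eqP -> /andP[/eqP FE _].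
  by move: Pv; rewrite /= FE eqxx.
have [z [Ez sz]] : exists z, z \in val E' /\ inl z \in s.
  have := @exit_lemma _ e (fun u : V => if u is inr (F, _) then F != E' else true) _ _ pp.
  rewrite EE' lp eqxx => /(_ isT isT) [u [v [up' vp Pu Pv euv]]].
  case: v vp Pv euv => [//|[F' h']] vp /= /negPn /eqP -> euv.
  case: u up' Pu euv => [z|[F h]] up' Pu euv; last first.
    by move: euv Pu => /= /andP[/eqP -> _]; rewrite eqxx.
  exists z; split => //.
  apply: internal_mem; rewrite ?lp //.
have yz : y = z.
  have := uniq_map_eq up sy sz.
  have fy : c (inl y) = j by move: Ey; rewrite /= !inE => /orP[]/eqP->.
  have fz : c (inl z) = j by move: Ez; rewrite /= !inE => /orP[]/eqP->.
  by move=> /(_ (etrans fy (esym fz))) [].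
subst z; move: Ey Ez; rewrite /= !inE => /orP[]/eqP-> /orP[]/eqP Hz.
- by move: ac; rewrite Hz eqxx.
- by move: ad; rewrite Hz eqxx.
- by move: bc; rewrite Hz eqxx.
- by move: bd; rewrite Hz eqxx.
Qed.
Definition cn (u : V) : nat := if u is inl i then val i %/ 3 else 0.

Lemma cn_lt (hm : 3 <= m) u : cn u < (m + 2) %/ 3.
Proof.
case: u => [i|_] /=; last by lia.
have := ltn_ord i; lia.
Qed.

Definition col (hm : 3 <= m) (u : V) : 'I_((m + 2) %/ 3) := Ordinal (cn_lt hm u).

Lemma upper (hm : 3 <= m) : rainbow_vertex_coloring e (col hm).
Proof.
move=> [x|[E h]] [y|[E' h']].
- case: (x =P y) => [->|nxy]; first by exists [::].
  by exists [:: inl y]; split => //=; rewrite /complete_rel andbT; apply/eqP.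
- case: (boolP (x \in val E')) => xE.
    by exists [:: inr (E', h')]; split => //=; rewrite xE.
  have [a [b [ab eE]]] := edge_mem E'.
  have aE : a \in val E' by rewrite eE !inE eqxx.
  exists [:: inl a; inr (E', h')]; split => //=; rewrite aE /complete_rel andbT andbT.
  by apply: contraNneq xE => ->.
- case: (boolP (y \in val E)) => yE.
    by exists [:: inl y]; split => //=; rewrite yE.
  have [a [b [ab eE]]] := edge_mem E.
  have aE : a \in val E by rewrite eE !inE eqxx.
  exists [:: inl a; inl y]; split => //=; rewrite aE /complete_rel andbT.
  by apply: contraNneq yE => <-.
- case: (boolP [exists a, (a \in val E) && (a \in val E')]).
    move=> /existsP[a /andP[aE aE']].
    by exists [:: inl a; inr (E', h')]; split => //=; rewrite aE aE'.
  rewrite negb_exists => /forallP disj.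
  have [a [b [ab eE]]] := edge_mem E.
  have [c0 [d [cd eE']]] := edge_mem E'.
  have dj : forall u v, u \in val E -> v \in val E' -> u != v.
    move=> u v uE vE; apply/eqP => uv; have := disj u.
    by rewrite uE uv vE.
  have [x [y [xE yE xy]]] : exists x y, [/\ x \in val E, y \in val E' & val x %/ 3 != val y %/ 3].
    have ac := dj a c0; have ad := dj a d; have bc := dj b c0; have bd := dj b d.
    rewrite eE eE' !inE !eqxx ?orbT in ac ad bc bd.
    rewrite eE eE'.
    have {}ac := ac isT isT; have {}ad := ad isT isT.
    have {}bc := bc isT isT; have {}bd := bd isT isT.
    case: (eqVneq (val a %/ 3) (val c0 %/ 3)) => hac; last first.
      by exists a, c0; rewrite !inE !eqxx ?orbT.
    case: (eqVneq (val a %/ 3) (val d %/ 3)) => had; last first.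
      by exists a, d; rewrite !inE !eqxx ?orbT.
    case: (eqVneq (val b %/ 3) (val c0 %/ 3)) => hbc; last first.
      by exists b, c0; rewrite !inE !eqxx ?orbT.
    exfalso.
    exact: (four ab ac ad bc bd cd hac had hbc).
  exists [:: inl x; inl y; inr (E', h')]; split => //=.
    rewrite xE yE /complete_rel !andbT.
    by apply: contraNneq xy => ->.
  by rewrite andbT inE -(inj_eq val_inj) /=.
Qed.
End Main.

Theorem theorem8 (m n : nat) (TH : finType) (eH : rel TH) :
  3 <= m -> 2 <= n -> #|TH| = n ->
  simple_graph eH -> connected_graph eH ->
  rvc_is (corona_rel (complete_rel m) eH) ((m + 2) %/ 3).
Proof.
move=> hm hn hT _ _.
have : 0 < #|TH| by lia.
case/card_gt0P => h0 _.
split; first by exists (@col m TH hm); apply: upper.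
by move=> k [c Hc]; apply: (lower h0 Hc).
Qed.
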